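(* The space $L(\omega_1)$ is a $P$-space that is not a Frolik space. In particular, there is a $P$-space that is not Frolik.
   Context: $L(\omega_1)$ is the set $\omega_1+1=\{\alpha:\alpha\le\omega_1\}$ with the topology in which every $\alpha<\omega_1$ is isolated and the sets $]\alpha,\omega_1]=\{\gamma:\alpha<\gamma\le\omega_1\}$, $\alpha<\omega_1$, form a local base at $\omega_1$. A $P$-space is a space in which every countable intersection of open sets is open. A space $X$ is Frolik if there is a sequence $\langle S_n:n<\omega\rangle$ of $\sigma$-compact spaces and a closed subset $F\subseteq\prod_{n<\omega}S_n$ such that $X$ is homeomorphic to $F$; $\sigma$-compact means a countable union of compact subspaces. *)

(* Defs.v *)
From HB Require Import structures.
From mathcomp Require Import all_boot all_order.
From mathcomp Require Import boolp classical_sets functions cardinality.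
From mathcomp Require Import topology.
Set Implicit Arguments. Unset Strict Implicit. Unset Printing Implicit Defensive.
Import Order.TTheory.
Local Open Scope classical_set_scope.
Local Open Scope order_scope.

Definition is_omega1 (d : Order.disp_t) (W : orderType d) : Prop :=
  [/\ (forall A : set W, A !=set0 -> exists x, A x /\ forall y, A y -> x <= y),
      ~ countable [set: W]
    & forall x : W, countable [set y | y < x]].

(* L(W): the set W + {top}, where [None] plays the role of the top point
   omega_1 and [Some a] the ordinal a < omega_1. *)
Definition Lspace (d : Order.disp_t) (W : orderType d) : Type := option W.

HB.instance Definition _ d (W : orderType d) := Choice.on (Lspace W).

(* Open sets: every point of W is isolated; a set containing the top point is
   open iff it contains a tail ]a, top] (the alternative A = setT only matters
   when W is empty). *)
Definition Lopen d (W : orderType d) (A : set (Lspace W)) : Prop :=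
  A None -> A = setT \/ exists a : W, forall y : W, a < y -> A (Some y).

Lemma Lopen_T d (W : orderType d) : Lopen (@setT (Lspace W)).
Proof. by move=> _; left. Qed.

Lemma Lopen_I d (W : orderType d) : setI_closed (@Lopen d W).
Proof.
move=> A B oA oB [/oA hA /oB hB].
case: hA => [-> | [a ha]]; case: hB => [-> | [b hb]].
- by left; rewrite setIT.
- by right; exists b => y yb; split=> //; apply: hb.
- by right; exists a => y ya; split=> //; apply: ha.
- right; exists (Order.max a b) => y; rewrite gt_max => /andP[ya yb].
  by split; [apply: ha | apply: hb].
Qed.

Lemma Lopen_bigU d (W : orderType d) (I : Type) (f : I -> set (Lspace W)) :
  (forall i, Lopen (f i)) -> Lopen (\bigcup_i f i).
Proof.
move=> of_ [i _ fi]; case: (of_ i fi) => [fT | [a ha]].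
- by left; apply/seteqP; split=> // x _; exists i => //; rewrite fT.
- by right; exists a => y ya; exists i => //; apply: ha.
Qed.

HB.instance Definition _ d (W : orderType d) :=
  isOpenTopological.Build (Lspace W) (@Lopen_T d W) (@Lopen_I d W)
    (@Lopen_bigU d W).

Definition P_space (X : topologicalType) : Prop :=
  forall U : nat -> set X, (forall n, open (U n)) -> open (\bigcap_n U n).

Definition sigma_compact (S : topologicalType) : Prop :=
  exists K : nat -> set S, (forall n, compact (K n)) /\ \bigcup_n K n = setT.

Definition homeomorphism_onto (X Y : topologicalType) (f : X -> Y) (F : set Y)
  : Prop :=
  [/\ injective f, f @` setT = F, continuous f
    & forall U : set X, open U -> exists V : set Y, open V /\ f @` U = F `&` V].

Definition Frolik (X : topologicalType) : Prop :=
  exists (S : nat -> topologicalType) (F : set (prod_topology S)),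
    [/\ forall n, sigma_compact (S n), closed F
      & exists f : X -> prod_topology S, homeomorphism_onto f F].

(* Main.v *)
Require Import Defs.
From HB Require Import structures.
From mathcomp Require Import all_boot all_order.
From mathcomp Require Import boolp classical_sets functions cardinality.
From mathcomp Require Import topology.
Unset Printing Implicit Defensive.
Local Open Scope classical_set_scope.
Import Order.TTheory.

Lemma prod_cvg (S : nat -> topologicalType) (F : set_system (prod_topology S))
  (w : prod_topology S) : Filter F ->
  (forall i, (fun y : prod_topology S => y i) @ F --> w i) -> F --> w.
Proof.
move=> FF h.
apply/cvg_sup => i; apply/cvg_image => //.
  apply/seteqP; split => // z _.
  exists (@dfwith _ _ w i z) => //; by rewrite dfwith_in.
move=> B /h /= FB; exists ((fun y : prod_topology S => y i) @^-1` B) => //.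
apply/seteqP; split => [z [y /= yB <-] //| z Bz].
exists (@dfwith _ _ w i z); by rewrite /= dfwith_in.
Qed.
Lemma ultra_cvg_compact (T : topologicalType) (U : set_system nat)
  (UU : UltraFilter U) (g : nat -> T) (K : set T) :
  compact K -> U (g @^-1` K) -> exists q : T, g @ U --> q.
Proof.
move=> Kc UK.
have [q [Kq clq]] := Kc (g @ U) _ UK.
exists q => B nB.
case: (in_ultra_setVsetC (g @^-1` B) UU) => // nc.
have [z [nBz Bz]] := clq (~` B) B nc nB.
by [].
Qed.

Section Tree.
Variables (X : topologicalType) (S : nat -> topologicalType)
  (K : forall n, nat -> set (S n)) (f : X -> prod_topology S) (A : set X).
Hypothesis Kcov : forall n, \bigcup_(m in setT) K n m = setT.

Definition Cs (s : seq nat) : set X :=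
  [set x | A x /\ forall i, (i < size s)%N -> K i (nth 0%N s i) (f x i)].

Lemma Cs_split s : Cs s = \bigcup_m Cs (rcons s m).
Proof.
apply/seteqP; split => x.
  move=> [Ax hx].
  have : (\bigcup_m K (size s) m) (f x (size s)) by rewrite Kcov.
  move=> [m _ Km]; exists m => //; split => // i.
  rewrite size_rcons ltnS leq_eqVlt => /orP[/eqP ->|lti].
    by rewrite nth_rcons ltnn eqxx.
  by rewrite nth_rcons lti; apply: hx.
move=> [m _ [Ax hx]]; split => // i lti.
have := hx i; rewrite size_rcons ltnS nth_rcons lti; apply.
exact: ltnW.
Qed.

Definition nextm (s : seq nat) : nat :=
  xget 0%N [set m | ~ countable (Cs (rcons s m))].

Fixpoint pre (n : nat) : seq nat :=
  if n is n'.+1 then rcons (pre n') (nextm (pre n')) else [::].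

Lemma pre_unc n : ~ countable A -> ~ countable (Cs (pre n)).
Proof.
move=> uA; elim: n => [|n IH] /=.
  have -> : Cs [::] = A by apply/seteqP; split => x; [case|].
  exact: uA.
have : exists m, ~ countable (Cs (rcons (pre n) m)).
  apply: contrapT => hn; apply: IH; rewrite Cs_split.
  apply: bigcup_countable => // m _.
  apply: contrapT => hm; apply: hn; by exists m.
by move/(xgetPex 0%N).
Qed.

Definition phi (i : nat) := nextm (pre i).

Lemma size_pre n : size (pre n) = n.
Proof. by elim: n => //= n IH; rewrite size_rcons IH. Qed.

Lemma nth_pre n i : (i < n)%N -> nth 0%N (pre n) i = phi i.
Proof.
elim: n => // n IH /=; rewrite ltnS leq_eqVlt => /orP[/eqP ->|lti].
  by rewrite nth_rcons size_pre ltnn eqxx.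
by rewrite nth_rcons size_pre lti IH.
Qed.

End Tree.
Arguments Cs {X S} K f A s.
Arguments nextm {X S} K f A s.
Arguments pre {X S} K f A n.
Arguments phi {X S} K f A i.
Arguments pre_unc {X S K f A} Kcov n.
Arguments size_pre {X S} K f A n.
Arguments nth_pre {X S} K f A {n i}.
Section Points.
Variables (X : topologicalType) (S : nat -> topologicalType)
  (K : forall n, nat -> set (S n)) (f : X -> prod_topology S) (A : set X)
  (x0 : X).

Fixpoint pts (n : nat) : seq X :=
  if n is n'.+1 then
    rcons (pts n') (xget x0 (Cs K f A (pre K f A n') `\` [set y | y \in pts n']))
  else [::].

Definition xs k := xget x0 (Cs K f A (pre K f A k) `\` [set y | y \in pts k]).

Hypothesis Kcov : forall n, \bigcup_m K n m = setT.
Hypothesis uA : ~ countable A.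

Lemma xs_spec k : Cs K f A (pre K f A k) (xs k) /\ ~ (xs k \in pts k).
Proof.
have : exists y, (Cs K f A (pre K f A k) `\` [set y | y \in pts k]) y.
  apply: contrapT => h; apply: (pre_unc (f:=f) Kcov k uA).
  apply: (sub_countable (B := [set y | y \in pts k])).
    apply: subset_card_le => y Cy; apply: contrapT => ny; apply: h.
    by exists y; split.
  by apply: finite_set_countable; exact: finite_seq.
by move/(xgetPex x0) => [].
Qed.

Lemma mem_pts j k : (j < k)%N -> xs j \in pts k.
Proof.
elim: k => // k IH; rewrite ltnS leq_eqVlt => /orP[/eqP ->|ljk] /=.
  by rewrite mem_rcons in_cons eqxx.
by rewrite mem_rcons in_cons IH ?orbT.
Qed.

Lemma xs_inj : injective xs.
Proof.
move=> j k e; apply/eqP; rewrite eqn_leq; apply/andP; split;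
  rewrite leqNgt; apply/negP => lt.
- have := mem_pts _ _ lt; rewrite -e => h; exact: (xs_spec j).2 h.
- have := mem_pts _ _ lt; rewrite e => h; exact: (xs_spec k).2 h.
Qed.

End Points.
Arguments xs {X S} K f A x0 k.
Arguments xs_spec {X S K f A} x0 Kcov uA k.
Arguments xs_inj {X S K f A x0} Kcov uA.

Lemma not_frolik_gen (X : topologicalType) (A : set X) :
  ~ countable A ->
  (forall x : nat -> X, injective x -> (forall k, A (x k)) -> forall p : X,
     exists U, [/\ open U, U p & exists m, forall k, (m <= k)%N -> ~ U (x k)]) ->
  ~ Frolik X.
Proof.
move=> uA hX [S [F [hS cF [f [finj fim _ fop]]]]].
pose K n := projT1 (cid (hS n)).
have Kc n m : compact (K n m) by exact: (projT2 (cid (hS n))).1.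
have Kcov n : \bigcup_m K n m = setT by exact: (projT2 (cid (hS n))).2.
have [x0 _] : exists x, A x.
  apply: contrapT => h; apply: uA; rewrite (_ : A = set0) ?countable0 //.
  by apply/seteqP; split=> x // Ax; apply: h; exists x.
pose x := xs K f A x0.
have xinj : injective x by exact: xs_inj.
have xC k : Cs K f A (pre K f A k) (x k) by exact: (xs_spec x0 Kcov uA k).1.
have [U [UU sU]] := @ultraFilterLemma nat eventually _.
have Uge m : U [set k | (m <= k)%N] by apply: sU; exists m.
pose y k := f (x k).
have hw i : exists q : S i, (fun k => y k i) @ U --> q.
  apply: (@ultra_cvg_compact _ U UU (fun k => y k i) _ (Kc i (phi K f A i))).
  apply: filterS (Uge i.+1) => k /= lik.
  have [_ h] := xC k.
  by have := h i; rewrite size_pre (nth_pre K f A lik); apply.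
pose w : prod_topology S := fun i => projT1 (cid (hw i)).
have yw : y @ U --> w.
  apply: prod_cvg => i; exact: (projT2 (cid (hw i))).
have Fy k : F (y k) by rewrite -fim; exists (x k).
have Fw : F w.
  have h := @closed_cvg nat _ U _ y F cF; apply: (h _ _ w yw); exact: nearW.
rewrite -fim in Fw; case: Fw => p _ fp.
have [U0 [oU0 U0p [m hm]]] := hX x xinj (fun k => (xC k).1) p.
have [V [oV eV]] := fop U0 oU0.
have Vw : V w.
  have : (f @` U0) (f p) by exists p.
  by rewrite eV meetEset fp => -[].
have UV : U [set k | V (y k)] by apply: yw; exact: open_nbhs_nbhs.
have UU0 : U [set k | U0 (x k)].
  apply: filterS UV => k /= Vk.
  have : (F `&` V) (y k) by [].
  by rewrite -meetEset -eV => -[u U0u /finj <-].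
have [k [a b]] := filter_ex (filterI UU0 (Uge m)).
exact: (hm k b a).
Qed.
Local Open Scope order_scope.
Lemma bound_seq d (W : orderType d) : is_omega1 W ->
  forall a : nat -> W, exists b, forall n, a n <= b.
Proof.
move=> [_ uW cW] a; apply: contrapT => nb; apply: uW.
have -> : [set: W] = \bigcup_(n in setT) [set y | y < a n].
  apply/seteqP; split => // y _; apply: contrapT => ny; apply: nb.
  exists y => n; rewrite leNgt; apply/negP => lt; apply: ny; by exists n.
by apply: bigcup_countable => // n _; exact: cW.
Qed.

Lemma uncount_inhab T (A : set T) : ~ countable A -> exists x, A x.
Proof.
move=> uA; apply: contrapT => h; apply: uA; rewrite (_ : A = set0) ?countable0 //.
by apply/seteqP; split=> x // Ax; apply: h; exists x.
Qed.

Lemma Lspace_P d (W : orderType d) : is_omega1 W -> P_space (Lspace W).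
Proof.
move=> hW U oU; change (Lopen (\bigcap_n U n)) => hN.
have [w0 _] : exists w : W, setT w by case: hW => _ u _; exact: uncount_inhab u.
have ha n : exists a : W, forall y : W, a < y -> U n (Some y).
  case: (oU n (hN n I)) => [-> | //]; by exists w0.
have [b hb] := bound_seq _ _ hW (fun n => projT1 (cid (ha n))).
right; exists b => y by_ n _.
apply: (projT2 (cid (ha n))); exact: le_lt_trans (hb n) by_.
Qed.

Lemma single_ok (T : topologicalType) (x : nat -> T) (p : T) :
  injective x -> exists m, forall k, (m <= k)%N -> ~ [set p] (x k).
Proof.
move=> xinj; case: (pselect (exists k, x k = p)) => [[k xk]|nk].
  exists k.+1 => j hj xj; have /xinj ejk : x j = x k by rewrite xk.
  by rewrite ejk ltnn in hj.
by exists 0%N => k _ xk; apply: nk; exists k.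
Qed.

Lemma Lspace_notF d (W : orderType d) : is_omega1 W -> ~ Frolik (Lspace W).
Proof.
move=> hW; apply: (@not_frolik_gen (Lspace W) (range (@Some W))).
  move/countable_injP => [g ginj]; case: hW => _ uW _; apply: uW.
  apply/countable_injP; exists (fun w => g (Some w)) => a b _ _ e.
  have : Some a = Some b.
    by apply: ginj => //; apply: mem_set; [exists a|exists b].
  by case.
move=> x xinj Ax [a|].
  exists [set Some a]; split => //.
  exact: (single_ok _ x _ xinj).
have ha k : exists y : W, x k = Some y by case: (Ax k) => y _ <-; exists y.
pose a k := projT1 (cid (ha k)).
have xa k : x k = Some (a k) := projT2 (cid (ha k)).
have [b hb] := bound_seq _ _ hW a.
exists [set o : Lspace W | if o is Some y then b < y else True]; split => //.
  change (Lopen [set o : Lspace W | if o is Some y then b < y else True]).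
  by move=> _; right; exists b.
exists 0%N => k _; rewrite xa /= => lt.
by have := hb k; rewrite leNgt lt.
Qed.

Definition Dsp := set nat.
HB.instance Definition _ := Choice.on Dsp.
Definition Dopen (A : set Dsp) : Prop := True.
Lemma Dopen_T : Dopen setT. Proof. by []. Qed.
Lemma Dopen_I : setI_closed Dopen. Proof. by []. Qed.
Lemma Dopen_bigU (I : Type) (f : I -> set Dsp) :
  (forall i, Dopen (f i)) -> Dopen (\bigcup_i f i).
Proof. by []. Qed.
HB.instance Definition _ :=
  isOpenTopological.Build Dsp Dopen_T Dopen_I Dopen_bigU.

Lemma Dsp_uncount : ~ countable [set: Dsp].
Proof.
move/countable_injP => [g ginj].
pose D : set nat := [set n | forall B : Dsp, g B = n -> ~ B n].
have hD : ~ D (g D) by move=> h; exact: (h D erefl h).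
apply: (hD); rewrite /D /= => B eB BgD.
have eBD : B = D by apply: ginj => //; apply: mem_set.
by subst B; exact: hD BgD.
Qed.

Lemma Dsp_P : P_space Dsp.
Proof. by move=> U _; change (Dopen (\bigcap_n U n)). Qed.

Lemma Dsp_notF : ~ Frolik Dsp.
Proof.
apply: (@not_frolik_gen _ setT Dsp_uncount) => x xinj _ p.
exists [set p]; split => //; last exact: (single_ok _ x _ xinj).
Qed.

Theorem mainTheorem7 :
  (forall (d : Order.disp_t) (W : orderType d), is_omega1 W ->
     P_space (Lspace W) /\ ~ Frolik (Lspace W)) /\
  (exists X : topologicalType, P_space X /\ ~ Frolik X).
Proof.
split.
  by move=> d W hW; split; [exact: Lspace_P | exact: Lspace_notF].
by exists Dsp; split; [exact: Dsp_P | exact: Dsp_notF].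
Qed.
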